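(* Let $d=2b$ be even, $d\geq 4$. Then every half-edge of every $d$-branching mobile has even weight (in $\{0,\dots,d-2\}$). Similarly, for every face-rooted $d$-angulation admitting a $d/(d-2)$-orientation, its minimal $d/(d-2)$-orientation has only even weights.
   Context: A map is a connected finite graph (loops and multiple edges allowed) embedded in the oriented sphere up to orientation-preserving homeomorphism; a $d$-angulation has all faces of degree $d$. A face-rooted map has a marked root-face; vertices and edges incident to it are outer, others inner. A biorientation assigns to each half-edge a direction (ingoing toward its vertex, or outgoing); an edge is $i$-way if $i$ of its half-edges are ingoing. Directed paths follow 2-way edges or 1-way edges toward their ingoing half-edge; a circuit is a simple closed directed path; it is counterclockwise if the root-face is on its right; a biorientation is minimal if it has no counterclockwise circuit. An $\mathbb N$-biorientation gives weights in $\{0,1,2,\dots\}$ to half-edges, positive on ingoing and zero on outgoing ones; edge weight = sum of the two half-edge weights; vertex weight = sum of weights of incident ingoing half-edges. A $d/(d-2)$-orientation of a face-rooted $d$-angulation is an $\mathbb N$-biorientation with inner edges of weight $d-2$, inner vertices of weight $d$, outer edges of weight $1$, outer vertices of weight $1$; if one exists, there is a unique minimal one. A mobile is a plane tree whose vertices are black or white (not necessarily properly), black vertices possibly carrying dangling half-edges (buds). An $\mathbb N$-mobile gives each non-bud half-edge a weight in $\{0,1,2,\dots\}$, positive if incident to a white vertex, zero if incident to a black vertex; vertex weight = sum of weights of incident non-bud half-edges; black-vertex degree counts buds. A $d$-branching mobile is an $\mathbb N$-mobile with all black vertices of degree $d$, all white vertices of weight $d$, all edges of weight $d-2$. *)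

(* Defs.v *)
From HB Require Import structures.
From mathcomp Require Import all_boot all_fingroup.
Set Implicit Arguments. Unset Strict Implicit. Unset Printing Implicit Defensive.


(* Combinatorial maps.  A map is given by a finite set D of darts (half-     *)
(* edges), a permutation [sigma] giving the COUNTERCLOCKWISE cyclic order of *)
(* darts around each vertex, and a fixed-point-free involution [alpha]       *)
(* pairing the two half-edges of each edge.  Vertices = sigma-orbits, edges  *)
(* = alpha-orbits, faces = orbits of phi : h |-> sigma (alpha h).            *)
(* With sigma counterclockwise, the face (phi-orbit) of a dart h is the face *)
(* lying on the RIGHT of h when h is traversed from its own vertex towards   *)
(* the vertex of [alpha h].                                                  *)
(* Connected maps on the oriented sphere up to orientation-preserving        *)
(* homeomorphism correspond to such data satisfying connectivity and Euler's *)
(* formula V - E + F = 2.                                                    *)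

Section Maps.
Variable D : finType.
Variables sigma alpha : {perm D}.

(* phi h = sigma (alpha h)  (mathcomp: (s * t) x = t (s x)) *)
Definition phi : {perm D} := (alpha * sigma)%g.

Definition vertex_of (h : D) : {set D} := porbit sigma h.
Definition face_of (h : D) : {set D} := porbit phi h.
Definition edge_of (h : D) : {set D} := [set h; alpha h].

Definition map_rel : rel D := fun x y => (y == sigma x) || (y == alpha x).

Definition is_planar_map : Prop :=
  [/\ forall h, alpha (alpha h) = h,
      forall h, alpha h != h,
      forall x y, connect map_rel x y
    & #|porbits sigma| + #|porbits phi| = (#|D| %/ 2 + 2)%N].

Definition is_d_angulation (d : nat) : Prop :=
  forall h, #|face_of h| = d.

Variable r : D.
Definition root_face : {set D} := face_of r.

Definition outer_edge (h : D) : bool :=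
  (h \in root_face) || (alpha h \in root_face).
Definition outer_vertex (h : D) : bool :=
  [exists x in vertex_of h, x \in root_face].

(* An N-biorientation is a weight function w : D -> nat; a half-edge h is    *)
(* ingoing iff 0 < w h and outgoing iff w h = 0.                             *)
Variable w : D -> nat.

Definition edge_weight (h : D) : nat := w h + w (alpha h).
Definition vertex_weight (h : D) : nat := \sum_(x in vertex_of h) w x.

Definition is_d_dm2_orientation (d : nat) : Prop :=
  (forall h, edge_weight h = if outer_edge h then 1 else d - 2)
  /\ (forall h, vertex_weight h = if outer_vertex h then 1 else d).

(* A directed step along dart h goes from the vertex of h to the vertex of   *)
(* alpha h; it is allowed iff the half-edge alpha h (at the arrival vertex)  *)
(* is ingoing (2-way edges, or 1-way edges towards their ingoing half-edge). *)
Definition can_step (h : D) : bool := 0 < w (alpha h).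
Definition consecutive : rel D := fun x y => alpha x \in vertex_of y.

Definition is_circuit (s : seq D) : Prop :=
  [/\ s != [::], all can_step s, path.cycle consecutive s,
      uniq (map vertex_of s) & uniq (map edge_of s)].

Definition dual_rel_avoid (s : seq D) : rel D :=
  fun x y => (y == phi x) || ((y == alpha x) && (edge_of x \notin map edge_of s)).

(* the root face lies in the region on the right of the circuit, i.e. in the *)
(* region containing the right face of its first dart *)
Definition ccw_circuit (s : seq D) : Prop :=
  is_circuit s /\
  (match s with h :: _ => connect (dual_rel_avoid s) h r | [::] => false end).

Definition is_minimal : Prop := forall s, ~ ccw_circuit s.

End Maps.

(* Mobiles.  Darts D (half-edges, including buds), vertices V, vert : D -> V,*)
(* sigma = cyclic order around vertices (plane structure), alpha = involution*)
(* matching the two half-edges of each edge and fixing exactly the buds.      *)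
Section Mobiles.
Variables (D V : finType) (vert : D -> V) (sigma alpha : {perm D}).
Variables (bud : pred D) (black : pred V).

Definition tree_rel : rel V :=
  fun u v => [exists h, [&& ~~ bud h, vert h == u & vert (alpha h) == v]].

Definition is_mobile : Prop :=
  [/\ (forall h, alpha (alpha h) = h) /\ (forall h, (alpha h == h) = bud h),
      forall h, bud h -> black (vert h),
      forall h h', (vert h == vert h') = (h' \in porbit sigma h),
      forall u v, connect tree_rel u v
    & (#|[pred h | ~~ bud h]| + 2 = 2 * #|V|)%N ].

Variable w : D -> nat.

Definition is_N_mobile : Prop :=
  is_mobile /\ forall h, ~~ bud h -> (0 < w h) = ~~ black (vert h).

Definition mvertex_weight (v : V) : nat :=
  \sum_(h | (vert h == v) && ~~ bud h) w h.
Definition mdegree (v : V) : nat := #|[pred h | vert h == v]|.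

Definition is_d_branching (d : nat) : Prop :=
  [/\ is_N_mobile,
      forall v, black v -> mdegree v = d,
      forall v, ~~ black v -> mvertex_weight v = d
    & forall h, ~~ bud h -> w h + w (alpha h) = d - 2].

End Mobiles.

(* Main.v *)
Require Import Defs.
From mathcomp Require Import all_boot all_fingroup all_algebra.
From Stdlib Require Import Lia.
From mathcomp Require Import zify.
Set Implicit Arguments. Unset Strict Implicit. Unset Printing Implicit Defensive.

Lemma arith_key b Vo O : 2 <= b -> (2*b-1)*(2*Vo) = 8*b + (2*b-3)*O -> 2*Vo <= O + 2 -> O <= 4*b -> 2*Vo = O.
Proof.
move=> hb he hw hO.
have [h2|h2] := leqP (2*Vo) O.
  have h3 : (2*b-1)*(2*Vo) <= (2*b-1)*O by apply: leq_mul.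
  have h4 : O = 4*b by nia.
  subst O. nia.
have : (2*Vo = O+1) \/ (2*Vo = O+2) by lia.
case=> e; rewrite e in he; nia.
Qed.

Lemma arith_eq c F W Vo O Q :
  Vo + W + F = (c+2)*F + 2 -> 2*(c+2)*F = O + Q ->
  2*(Vo + 2*(c+2)*W) = O + (2*c+2)*Q -> (2*c+3)*(2*Vo) = 8*(c+2) + (2*c+1)*O.
Proof.
move=> he hn heq.
have := f_equal (muln (4*(c+2))) he.
have := f_equal (muln (2*c+2)) hn. lia.
Qed.

Lemma arith_all d F W Vo O Q : ~~ odd d -> 4 <= d ->
  Vo + W + F = (O + Q) %/ 2 + 2 -> d * F = O + Q ->
  2*(Vo + d*W) = O + (d-2)*Q -> 2*Vo <= O + 2 -> O <= 2*d -> 2*Vo = O.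
Proof.
move=> de d4 he hn heq hw hO.
have [c ec] : exists c, d = 2*(c+2).
  exists (d./2 - 2); move: (odd_double_half d); rewrite (negbTE de) add0n -mul2n; lia.
subst d.
have hn' : 2*(c+2)*F = O + Q by [].
have he' : Vo + W + F = (c+2)*F + 2.
  by rewrite he -hn' -mulnA mulKn.
have heq' : 2*(Vo + 2*(c+2)*W) = O + (2*c+2)*Q.
  by rewrite heq; congr (_ + _ * _); lia.
have := arith_eq he' hn' heq'.
have -> : 2*c+3 = 2*(c+2)-1 by lia.
have -> : 2*c+1 = 2*(c+2)-3 by lia.
move=> k; apply: (@arith_key (c+2)) => //; first lia.
lia.
Qed.

Lemma sum_porbits (T : finType) (s : {perm T}) (F : T -> nat) :
  \sum_h F h = \sum_(O in porbits s) \sum_(h in O) F h.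
Proof.
rewrite (partition_big_imset (porbit s)) /=.
apply: eq_bigr => O /imsetP [y _ ->]; apply: eq_bigl => x.
by rewrite eq_porbit_mem.
Qed.

Lemma even_sum (I : finType) (P : pred I) (F : I -> nat) :
  (forall i, P i -> ~~ odd (F i)) -> ~~ odd (\sum_(i | P i) F i).
Proof.
move=> H; apply: (big_ind (fun n => ~~ odd n)) => //.
by move=> x y hx hy; rewrite oddD (negbTE hx) (negbTE hy).
Qed.

Lemma porbitS (T : finType) (s : {perm T}) x y : x \in porbit s y -> s x \in porbit s y.
Proof.
rewrite -eq_porbit_mem => /eqP <-.
by have := mem_porbit s 1 x; rewrite expg1.
Qed.


Lemma path_iota (T : Type) (e : rel T) (X : nat -> T) i n :
  (forall k, i <= k -> k < i + n -> e (X k) (X k.+1)) ->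
  path e (X i) (map X (iota i.+1 n)) /\ last (X i) (map X (iota i.+1 n)) = X (i + n).
Proof.
elim: n i => [|n IH] i H /=; first by rewrite addn0.
have H' : forall k, i.+1 <= k -> k < i.+1 + n -> e (X k) (X k.+1).
  by move=> k h1 h2; apply: H; [exact: ltnW | rewrite addnS -addSn].
have [p l] := IH i.+1 H'.
by rewrite p l addSnnS H ?leqnn ?addnS ?ltnS ?leq_addr.
Qed.

Lemma cycle_iota (T : Type) (e : rel T) (X : nat -> T) i n :
  (forall k, i <= k -> k < i + n -> e (X k) (X k.+1)) -> e (X (i + n)) (X i) ->
  path.cycle e (map X (iota i n.+1)).
Proof.
move=> H he /=; rewrite rcons_path.
by have [p l] := path_iota H; rewrite p l he.
Qed.

Lemma rot_head (T : eqType) (s : seq T) t : t \in s -> exists s', rot (index t s) s = t :: s'.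
Proof.
move=> ts; rewrite /rot (drop_nth t) ?index_mem // nth_index //.
by eexists.
Qed.

Section Part2.
Variables (D : finType) (sigma alpha : {perm D}) (r : D) (w : D -> nat) (d : nat).
Hypothesis d_even : ~~ odd d.
Hypothesis d_ge4 : 4 <= d.
Hypothesis Hp : is_planar_map sigma alpha.
Hypothesis Hd : is_d_angulation sigma alpha d.
Hypothesis Ho : is_d_dm2_orientation sigma alpha r w d.

Local Notation ph := (phi sigma alpha).
Local Notation R := (root_face sigma alpha r).
Local Notation vtx := (vertex_of sigma).
Local Notation oe := (outer_edge sigma alpha r).
Local Notation ov := (outer_vertex sigma alpha r).

Let aK h : alpha (alpha h) = h.
Proof. by case: Hp. Qed.
Let aneq h : alpha h != h.
Proof. by case: Hp. Qed.
Let conn x y : connect (map_rel sigma alpha) x y.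
Proof. by case: Hp. Qed.
Let euler : #|porbits sigma| + #|porbits ph| = #|D| %/ 2 + 2.
Proof. by case: Hp. Qed.
Let ew h : edge_weight alpha w h = if oe h then 1 else d - 2.
Proof. by case: Ho. Qed.
Let vw h : vertex_weight sigma w h = if ov h then 1 else d.
Proof. by case: Ho. Qed.

Let phE h : ph h = sigma (alpha h).
Proof. by rewrite /phi permM. Qed.
Let oeA h : oe (alpha h) = oe h.
Proof. by rewrite /outer_edge aK orbC. Qed.
Let vtx_eq x y : x \in vtx y -> vtx x = vtx y.
Proof. by rewrite /vertex_of -eq_porbit_mem => /eqP. Qed.
Let ov_eq x y : x \in vtx y -> ov x = ov y.
Proof. by move=> /vtx_eq; rewrite /outer_vertex => ->. Qed.
Let sig_vtx h : sigma h \in vtx h.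
Proof. by have := mem_porbit sigma 1 h; rewrite expg1. Qed.
Let oe_ov h : oe h -> ov h.
Proof.
case/orP => H; apply/existsP.
  by exists h; rewrite porbit_id.
exists (sigma h); rewrite sig_vtx /= -[h in sigma h]aK -phE.
exact: porbitS.
Qed.

Definition ovs (O : {set D}) := [exists x in O, x \in R].

Let S_vtx : \sum_h w h = \sum_(O in porbits sigma) (if ovs O then 1 else d).
Proof.
rewrite (sum_porbits sigma); apply: eq_bigr => O /imsetP [y _ ->].
by have := vw y; rewrite /vertex_weight /outer_vertex.
Qed.

Let T_vtx : \sum_(h | ov h) w h = \sum_(O in porbits sigma) (if ovs O then 1 else 0).
Proof.
rewrite big_mkcond (sum_porbits sigma); apply: eq_bigr => O /imsetP [y _ ->].
rewrite (eq_bigr (fun h => if ov y then w h else 0)); last first.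
  by move=> h hy; rewrite (ov_eq hy).
have := vw y; rewrite /vertex_weight -/(ovs (vtx y)).
have -> : ov y = ovs (vtx y) by [].
case: (ovs _) => [<- //|_]; exact: big1.
Qed.

Let card_faces : #|D| = d * #|porbits ph|.
Proof.
transitivity (\sum_(h : D) 1); first by rewrite -sum1_card; apply: eq_bigl.
rewrite (sum_porbits ph) mulnC -sum_nat_const.
apply: eq_bigr => O /imsetP [y _ ->]; rewrite sum1_card.
exact: Hd.
Qed.

Let S_edge : (\sum_h w h) * 2 = \sum_(h | oe h) 1 + (d - 2) * \sum_(h | ~~ oe h) 1.
Proof.
rewrite muln2 -addnn {2}(reindex_inj (@perm_inj _ alpha)) -big_split /=.
rewrite (eq_bigr (fun h => if oe h then 1 else d - 2)); last by move=> h _; exact: ew.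
rewrite (bigID oe) /= big_distrr /=; congr (_ + _); apply: eq_bigr => h.
  by move->.
by move/negbTE->; rewrite muln1.
Qed.

Let So_edge : (\sum_(h | oe h) w h) * 2 = \sum_(h | oe h) 1.
Proof.
rewrite muln2 -addnn {2}(reindex_inj (@perm_inj _ alpha)) /=.
rewrite (eq_bigl oe); last by move=> h; rewrite oeA.
rewrite -big_split /=; apply: eq_bigr => h hh.
by have := ew h; rewrite hh.
Qed.

Let card_all : #|D| = \sum_(h | oe h) 1 + \sum_(h | ~~ oe h) 1.
Proof.
transitivity (\sum_(h : D) 1); first by rewrite -sum1_card; apply: eq_bigl.
by rewrite (bigID oe).
Qed.

Let xs i := iter i ph r.

Fixpoint Vset k : {set {set D}} :=
  if k is k'.+1 then vtx (xs k) |: Vset k' else [set vtx r].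
Fixpoint Eset k : {set D} :=
  if k is k'.+1 then xs k' |: (alpha (xs k') |: Eset k') else set0.

Let Vmem k i : i <= k -> vtx (xs i) \in Vset k.
Proof.
elim: k => [|k IH] /=; first by rewrite leqn0 => /eqP ->; rewrite inE.
rewrite leq_eqVlt => /orP [/eqP ->|hi]; first by rewrite setU11.
by rewrite in_setU1 IH ?orbT.
Qed.

Let memE k y : y \in Eset k -> exists2 i, i < k & (y = xs i \/ y = alpha (xs i)).
Proof.
elim: k => [|k IH] /=; first by rewrite inE.
rewrite !in_setU1 => /or3P [/eqP ->|/eqP ->|/IH [i hi H]].
- by exists k => //; left.
- by exists k => //; right.
- by exists i => //; apply: ltnW.
Qed.

Let vtx_next i : vtx (xs i.+1) = vtx (alpha (xs i)).
Proof. by apply: vtx_eq; rewrite /xs iterS phE sig_vtx. Qed.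

Let walk k : 2 * #|Vset k| <= #|Eset k| + 2.
Proof.
elim: k => [|k IH]; first by rewrite /= cards1 cards0.
rewrite [Vset _]/= [Eset _]/=.
rewrite cardsU1 !cardsU1.
case: (boolP (vtx (xs k.+1) \in Vset k)) => hin /=.
  by move: (xs k \notin _) (alpha (xs k) \notin _) IH => [] [] /=; lia.
have nE1 : alpha (xs k) \notin Eset k.
  apply/negP => /memE [i hi [e|e]]; apply/negP: hin.
    by rewrite vtx_next e Vmem // ltnW.
  by rewrite vtx_next e -vtx_next Vmem.
have nE2 : xs k \notin alpha (xs k) |: Eset k.
  rewrite in_setU1 negb_or eq_sym aneq /=; apply/negP => /memE [i hi [e|e]]; apply/negP: hin.
    by rewrite vtx_next e -vtx_next Vmem.
  by rewrite vtx_next e aK Vmem // ltnW.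
rewrite nE1 nE2 /= mulnDr; apply: leq_trans (leq_add (leqnn 2) IH) _; rewrite /= addnA addnC; lia.
Qed.

Let xsR i : xs i \in R.
Proof. by rewrite /xs -permX mem_porbit. Qed.

Let cardR : #|R| = d.
Proof. exact: Hd. Qed.

Let Vo_bound : 2 * \sum_(O in porbits sigma) (if ovs O then 1 else 0) <= \sum_(h | oe h) 1 + 2.
Proof.
have d1 : 0 < d by lia.
apply: leq_trans (_ : 2 * #|Vset d.-1| <= _); last first.
  apply: leq_trans (walk _) _; rewrite leq_add2r sum1_card.
  apply: subset_leq_card; apply/subsetP => y /memE [i _ [->|->]]; rewrite unfold_in.
    by rewrite /outer_edge xsR.
  by rewrite /outer_edge aK xsR orbT.
rewrite leq_mul2l /= -big_mkcondr /= sum1_card.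
apply: subset_leq_card; apply/subsetP => O; rewrite unfold_in => /andP [/imsetP [y _ ->]].
move=> /existsP [x /andP [xy xR]].
rewrite -[porbit sigma y]/(vtx y) -(vtx_eq xy).
move: xR; rewrite /root_face /face_of porbit_traject => /trajectP [i hi ->].
apply: Vmem; move: hi; rewrite -/(face_of _ _ r) (Hd r); lia.
Qed.

Let Oc_bound : \sum_(h | oe h) 1 <= 2 * d.
Proof.
rewrite sum1_card.
apply: leq_trans (_ : #|R :|: alpha @^-1: R| <= _).
  by apply: subset_leq_card; apply/subsetP => h; rewrite unfold_in !inE.
rewrite cardsU card_preimset; last exact: perm_inj.
rewrite cardR; lia.
Qed.

Lemma inner_at_outer h : ov h -> ~~ oe h -> w h = 0.
Proof.
move=> hv he.
set Vo := \sum_(O in porbits sigma) (if ovs O then 1 else 0).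
set Wn := \sum_(O in porbits sigma) (if ovs O then 0 else 1).
have hV : Vo + Wn = #|porbits sigma|.
  rewrite /Vo /Wn -big_split /= -sum1_card; apply: eq_bigr => O _; by case: ovs.
have hS : \sum_h w h = Vo + d * Wn.
  rewrite S_vtx /Vo /Wn big_distrr -big_split /=; apply: eq_bigr => O _; case: ovs => //=.
  by rewrite muln0. by rewrite muln1.
have key : 2 * Vo = \sum_(h | oe h) 1.
  apply: (@arith_all d #|porbits ph| Wn Vo _ (\sum_(h | ~~ oe h) 1)) => //.
  - by rewrite -card_all -euler -hV.
  - by rewrite -card_all card_faces.
  - by rewrite -hS mulnC S_edge.
have hT : \sum_(h | ov h) w h = \sum_(h | oe h) w h + \sum_(h | ov h && ~~ oe h) w h.
  rewrite (bigID oe) /=; congr (_ + _); apply: eq_bigl => x.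
  by case: (boolP (oe x)) => hx; rewrite ?andbT ?andbF ?oe_ov.
have : \sum_(h | ov h && ~~ oe h) w h = 0.
  move: hT; rewrite T_vtx -/Vo; have := So_edge; rewrite -key; lia.
move/eqP; rewrite sum_nat_eq0 => /forallP /(_ h); rewrite hv he /=.
by move/eqP.
Qed.


Let ew_in h : ~~ oe h -> w h + w (alpha h) = d - 2.
Proof. by move=> hn; have := ew h; rewrite /edge_weight (negbTE hn). Qed.

Let even_dm2 : ~~ odd (d - 2).
Proof.
rewrite -[d]odd_double_half (negbTE d_even) add0n.
by rewrite -(doubleB _ 1) odd_double.
Qed.

Definition oddw h := odd (w h) && ~~ oe h.

Let oddwA h : oddw (alpha h) = oddw h.
Proof.
rewrite /oddw oeA; case: (boolP (oe h)) => hn; rewrite ?andbF ?andbT //.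
have := even_dm2; rewrite -(ew_in hn) oddD.
by case: (odd (w h)); case: (odd (w (alpha h))).
Qed.

Let next_exists y : oddw y -> exists z, [&& z \in vtx (alpha y), z != alpha y & oddw z].
Proof.
move=> oy; set v := alpha y.
have ov' : oddw v by rewrite /v oddwA.
case: (pickP (fun z => [&& z \in vtx v, z != v & oddw z])) => [z Hz|H]; first by exists z.
exfalso.
have nov : ~~ ov v.
  apply/negP => hv; move/andP: ov' => [odv nev].
  by rewrite (inner_at_outer hv nev) in odv.
have := vw v; rewrite (negbTE nov) /vertex_weight (bigD1 v) ?porbit_id //= => hd.
have : ~~ odd (\sum_(i in vtx v | i != v) w i).
  apply: even_sum => x /andP [xv xnv].
  have := H x; rewrite xv xnv /= /oddw => /negbT.
  have -> : ~~ oe x.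
    by apply/negP => /oe_ov; rewrite (ov_eq xv) (negbTE nov).
  by rewrite andbT.
move: d_even; rewrite -hd oddD; case/andP: ov' => -> _ /=.
by case: (odd _).
Qed.

Definition nxt y := odflt y [pick z | [&& z \in vtx (alpha y), z != alpha y & oddw z]].

Let nxtP y : oddw y -> [&& nxt y \in vtx (alpha y), nxt y != alpha y & oddw (nxt y)].
Proof.
move=> oy; rewrite /nxt; case: pickP => [z -> //|H].
by have [z Hz] := next_exists oy; rewrite H in Hz.
Qed.

Let key_card : #|porbits sigma| <= #|D|.
Proof. exact: leq_imset_card. Qed.

Lemma circuit_exists h0 : oddw h0 -> exists s, is_circuit sigma alpha w s /\ all oddw s.
Proof.
move=> o0.
pose X k := iter k nxt h0.
have XP k : oddw (X k) by elim: k => //= k IH; case/and3P: (nxtP IH).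
have Xc k : alpha (X k) \in vtx (X k.+1).
  by case/and3P: (nxtP (XP k)) => H _ _; rewrite /vertex_of porbit_sym.
have Xne k : X k.+1 != alpha (X k) by case/and3P: (nxtP (XP k)).
have [i1 [j1 [lt1 e1]]] : exists i j, i < j /\ vtx (X i) = vtx (X j).
  pose f (k : 'I_#|D|.+1) := vtx (X k).
  have : ~~ injectiveb f.
    apply/negP => /injectiveP inj.
    have := card_imset [set: 'I_#|D|.+1] inj; rewrite cardsT card_ord => hc.
    have : #|f @: [set: 'I_#|D|.+1]| <= #|porbits sigma|.
      apply: subset_leq_card; apply/subsetP => O /imsetP [k _ ->].
      by apply/imsetP; exists (X k).
    rewrite hc => H; move: (leq_trans H key_card); by rewrite ltnn.
  move/injectivePn => [a [b ab fab]].
  case: (ltngtP a b) => hab.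
  - by exists a, b.
  - by exists b, a.
  - by move: ab; rewrite (val_inj hab) eqxx.
pose P j := [exists i : 'I_j, vtx (X i) == vtx (X j)].
have Pj1 : P j1 by apply/existsP; exists (Ordinal lt1); rewrite e1.
case: (ex_minnP (ex_intro P j1 Pj1)) => j0 /existsP [i0 /eqP e0] minj.
have inj a b : a < j0 -> b < j0 -> vtx (X a) = vtx (X b) -> a = b.
  move=> ha hb e; case: (ltngtP a b) => // hab.
  - have : P b by apply/existsP; exists (Ordinal hab); rewrite e.
    by move/minj; rewrite leqNgt hb.
  - have : P a by apply/existsP; exists (Ordinal hab); rewrite e.
    by move/minj; rewrite leqNgt ha.
case: i0 e0 => i0 lt0 /= e0.
set n := j0 - i0 - 1.
have ej : j0 = i0 + n.+1 by rewrite /n; lia.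
have edge_ne a b : i0 <= a -> a < b -> b < j0 -> edge_of alpha (X a) != edge_of alpha (X b).
  move=> h1 h2 h3; apply/negP => /eqP e.
  have : X b \in edge_of alpha (X a) by rewrite e !inE eqxx.
  rewrite !inE => /orP [/eqP eb|/eqP eb].
    have := inj a b (ltn_trans h2 h3) h3; rewrite eb => /(_ erefl) hab.
    by move: h2; rewrite hab ltnn.
  have vb : vtx (X b) = vtx (X a.+1) by rewrite eb (vtx_eq (Xc a)).
  case: (ltngtP a.+1 j0) => ha.
  - have := inj _ _ h3 ha vb => hb; move: (Xne a); by rewrite -hb eb eqxx.
  - lia.
  - rewrite ha -e0 in vb; have := inj _ _ h3 lt0 vb => hb.
    by move: h2; rewrite hb ltnNge h1.
exists (map X (iota i0 n.+1)); split; last by apply/allP => x /mapP [k _ ->].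
split.
- by [].
- apply/allP => x /mapP [k _ ->]; rewrite /can_step.
  by have := XP k; rewrite -oddwA => /andP [/odd_gt0].
- apply: cycle_iota => [k hk1 hk2|]; first exact: Xc.
  by rewrite /consecutive /= e0 ej addnS; exact: Xc.
- rewrite -map_comp map_inj_in_uniq ?iota_uniq // => a b.
  rewrite !mem_iota => /andP [ha1 ha2] /andP [hb1 hb2] /= e.
  by apply: inj => //; rewrite ej.
- rewrite -map_comp map_inj_in_uniq ?iota_uniq // => a b.
  rewrite !mem_iota -ej => /andP [ha1 ha2] /andP [hb1 hb2] /= e.
  case: (ltngtP a b) => // hab.
  + by move: (edge_ne _ _ ha1 hab hb2); rewrite e eqxx.
  + by move: (edge_ne _ _ hb1 hab ha2); rewrite e eqxx.
Qed.

Let edge_ofA x : edge_of alpha (alpha x) = edge_of alpha x.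
Proof. by apply/setP => y; rewrite !inE aK orbC. Qed.

Let mem_edge (s : seq D) x : (edge_of alpha x \in map (edge_of alpha) s) = (x \in s) || (alpha x \in s).
Proof.
apply/mapP/orP => [[t ts ext]|[H|H]].
- have : x \in edge_of alpha t by rewrite -ext !inE eqxx.
  rewrite !inE => /orP [/eqP eq|/eqP eq]; first by left; rewrite eq.
  by right; rewrite eq aK.
- by exists x.
- by exists (alpha x); rewrite ?edge_ofA.
Qed.

Local Notation Av s := (dual_rel_avoid sigma alpha s).

Let conn_phi s u i : connect (Av s) u ((ph ^+ i)%g u).
Proof.
elim: i => [|i IH]; first by rewrite expg0 perm1 connect0.
apply: connect_trans IH (connect1 _).
by rewrite expgSr permM /dual_rel_avoid eqxx.
Qed.

Let Av_sym s x y : Av s x y -> connect (Av s) y x.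
Proof.
case/orP => [/eqP -> | /andP [/eqP -> nS]].
- have : x \in porbit ph (ph x).
    by rewrite porbit_sym; have := mem_porbit ph 1 x; rewrite expg1.
  case/porbitP => i e; rewrite {2}e; exact: conn_phi.
- apply: connect1; apply/orP; right; by rewrite aK eqxx edge_ofA.
Qed.

Let conn_sym s x y : connect (Av s) x y -> connect (Av s) y x.
Proof.
move/connectP => [p]; elim: p x => [|z p IH] x /=; first by move=> _ ->; exact: connect0.
case/andP => hxz hp ey; apply: connect_trans (IH _ hp ey) (Av_sym hxz).
Qed.

Let closure s x y : (forall z, connect (Av s) r z -> ~~ ((z \in s) || (alpha z \in s))) ->
  connect (Av s) r x -> connect (map_rel sigma alpha) x y -> connect (Av s) r y.
Proof.
move=> H hx /connectP [p]; elim: p x hx => [|z p IH] x hx /=; first by move=> _ ->.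
case/andP => hxz hp ey; apply: IH hp ey.
have ha : connect (Av s) r (alpha x).
  apply: connect_trans (hx) (connect1 _); apply/orP; right.
  rewrite eqxx /= (mem_edge s x); exact: H hx.
case/orP: hxz => /eqP ->; last exact: ha.
apply: connect_trans ha (connect1 _); by rewrite /dual_rel_avoid phE aK eqxx.
Qed.

Let circ_rot s k : is_circuit sigma alpha w s -> is_circuit sigma alpha w (rot k s).
Proof.
case=> ne cs cy uv ue; split.
- by rewrite -size_eq0 size_rot size_eq0.
- by apply/allP => x; rewrite mem_rot; exact: (allP cs).
- by rewrite rot_cycle.
- by rewrite map_rot rot_uniq.
- by rewrite map_rot rot_uniq.
Qed.

Let map_vtx_alpha x p : path (consecutive sigma alpha) x p -> map (vtx \o alpha) (belast x p) = map vtx p.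
Proof.
elim: p x => [|y p IH] x //= /andP [hxy hp].
by rewrite (IH _ hp) /= (vtx_eq hxy).
Qed.

Let circ_rev s : is_circuit sigma alpha w s -> all oddw s -> is_circuit sigma alpha w (map alpha (rev s)).
Proof.
case=> ne cs cy uv ue ao; split.
- by rewrite -size_eq0 size_map size_rev size_eq0.
- apply/allP => x /mapP [t ts ->]; rewrite /can_step aK.
  move: ts; rewrite mem_rev => ts.
  by have := allP ao t ts => /andP [/odd_gt0].
- rewrite cycle_map rev_cycle; rewrite -(@eq_cycle _ (consecutive sigma alpha)) //.
  by move=> a b /=; rewrite /consecutive aK /vertex_of porbit_sym.
- rewrite -map_comp map_rev rev_uniq.
  case: s ne cy uv {cs ue ao} => // x p _ cy uv.
  rewrite -(belast_rcons x p x) map_vtx_alpha // -rot1_cons map_rot rot_uniq.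
  exact: uv.
- rewrite -map_comp (eq_map edge_ofA) map_rev rev_uniq; exact: ue.
Qed.

Lemma part2_even h : is_minimal sigma alpha r w -> ~~ oe h -> ~~ odd (w h).
Proof.
move=> Hmin hn; apply/negP => ho.
have [s [cs ao]] := @circuit_exists h (introT andP (conj ho hn)).
have [z hz zs] : exists2 z, connect (Av s) r z & ((z \in s) || (alpha z \in s)).
  case: (pickP (fun z => connect (Av s) r z && ((z \in s) || (alpha z \in s)))) => [z /andP [? ?]|H].
    by exists z.
  exfalso.
  have H' : forall z, connect (Av s) r z -> ~~ ((z \in s) || (alpha z \in s)).
    by move=> z hz; have := H z; rewrite hz /= => ->.
  case: cs => ne _ _ _ _; case: s ne {ao H} H' => // t s' _ H'.
  have := closure H' (connect0 _ r) (conn r t) => ht.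
  by move: (H' t ht); rewrite mem_head.
have zr := conn_sym hz.
have fin : forall s1, is_circuit sigma alpha w s1 -> z \in s1 ->
    (forall x, (x \in map (edge_of alpha) s1) = (x \in map (edge_of alpha) s)) -> False.
  move=> s1 c1 z1 me.
  have [s' e] := rot_head z1.
  apply: (Hmin (rot (index z s1) s1)); split; first exact: circ_rot.
  rewrite e; apply: etrans zr; apply: eq_connect => a b.
  by rewrite /dual_rel_avoid -e map_rot mem_rot me.
case/orP: zs => zs.
- by apply: (fin s).
- apply: (fin _ (circ_rev cs ao)).
    by rewrite -[z]aK map_f // mem_rev.
  by move=> x; rewrite -map_comp (eq_map edge_ofA) map_rev mem_rev.
Qed.

End Part2.

Import GRing.Theory.

Lemma F2_add0 (a b : 'F_2) : (a + b = 0)%R -> a = b.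
Proof. move=> /eqP; rewrite addr_eq0 => /eqP ->. by rewrite oppr_pchar2 // pchar_Fp. Qed.

Lemma even_sub2 d : ~~ odd d -> ~~ odd (d - 2).
Proof.
move=> he; rewrite -[d]odd_double_half (negbTE he) add0n.
by rewrite -(doubleB _ 1) odd_double.
Qed.

Lemma connect_const (T : finType) (R : Type) (e : rel T) (f : T -> R) :
  (forall x y, e x y -> f x = f y) -> forall x y, connect e x y -> f x = f y.
Proof.
move=> He x y /connectP [p]; elim: p x => [|z p IH] x /=; first by move=> _ ->.
by move=> /andP[exz pz] ey; rewrite (He _ _ exz); exact: IH pz ey.
Qed.

Lemma sum_ind (R : nzRingType) (T : finType) (g : 'I_#|T| -> R) (x : T) :
  (\sum_j g j * (x == enum_val j)%:R = g (enum_rank x))%R.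
Proof.
rewrite (bigD1 (enum_rank x)) //= enum_rankK eqxx mulr1 big1 ?addr0 // => j ne.
rewrite (_ : (x == enum_val j) = false) ?mulr0 //; apply: contraNF ne => /eqP ->.
by rewrite enum_valK.
Qed.

Section Part1.
Variables (D V : finType) (vert : D -> V) (sigma alpha : {perm D}).
Variables (bud : pred D) (black : pred V) (w : D -> nat) (d : nat).
Hypothesis d_even : ~~ odd d.
Hypothesis Hb : is_d_branching vert sigma alpha bud black w d.

Let aK : forall h, alpha (alpha h) = h.
Proof. by case: Hb => [[[[]]]]. Qed.
Let abud : forall h, (alpha h == h) = bud h.
Proof. by case: Hb => [[[[]]]]. Qed.
Let conn : forall u v, connect (tree_rel vert alpha bud) u v.
Proof. by case: Hb => [[[]]]. Qed.
Let count : (#|[pred h | ~~ bud h]| + 2 = 2 * #|V|)%N.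
Proof. by case: Hb => [[[]]]. Qed.
Let Nm : forall h, ~~ bud h -> (0 < w h) = ~~ black (vert h).
Proof. by case: Hb => [[]]. Qed.
Let white : forall v, ~~ black v -> mvertex_weight vert bud w v = d.
Proof. by case: Hb. Qed.
Let ew : forall h, ~~ bud h -> (w h + w (alpha h) = d - 2)%N.
Proof. by case: Hb. Qed.

Let budA h : bud (alpha h) = bud h.
Proof. by rewrite -!abud aK eq_sym. Qed.

Let neqA h : ~~ bud h -> alpha h != h.
Proof. by rewrite abud. Qed.

Definition rep (h : D) := ~~ bud h && (enum_rank h < enum_rank (alpha h))%N.

Let repA h : ~~ bud h -> rep (alpha h) = ~~ rep h.
Proof.
move=> nb; have ne : (enum_rank (alpha h) : nat) != enum_rank h.
  by rewrite (inj_eq val_inj) (inj_eq enum_rank_inj) neqA.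
by rewrite /rep budA nb aK /= -leqNgt ltn_neqAle ne.
Qed.

Let oddA h : ~~ bud h -> odd (w (alpha h)) = odd (w h).
Proof.
move=> nb; have := even_sub2 d_even; rewrite -(ew nb) oddD.
by case: (odd (w h)); case: (odd (w (alpha h))).
Qed.

Let card_rep : (#|rep| = #|V| - 1)%N.
Proof.
have := cardID rep [pred h | ~~ bud h].
have -> : #|[predI [pred h | ~~ bud h] & rep]| = #|rep|.
  by apply: eq_card => h; rewrite !inE !unfold_in /=; case: (bud h).
have -> : #|[predD [pred h | ~~ bud h] & rep]| = #|rep|.
  rewrite -(card_image (@perm_inj _ alpha) rep); apply: eq_card => h.
  rewrite !inE; apply/andP/imageP.
    move=> [nrep nb]; exists (alpha h); last by rewrite aK.
    by change (rep (alpha h)); rewrite repA.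
  move=> [h' rh' ->]; have {rh'} rh' : rep h' by [].
  have nb : ~~ bud h' by case/andP: rh'.
  change (~~ rep (alpha h') /\ ~~ bud (alpha h')).
  by rewrite repA // rh' budA nb.
move=> H; move: count; rewrite [X in (X + 2)%N](_ : _ = #|rep| + #|rep|)%N; [lia | exact: esym H].
Qed.

Local Open Scope ring_scope.

Definition Amx : 'M['F_2]_(#|rep|, #|V|) :=
  \matrix_(i, j) ((vert (enum_val i) == enum_val j) + (vert (alpha (enum_val i)) == enum_val j))%:R.

Let Vpos : (0 < #|V|)%N.
Proof. move: count; lia. Qed.

Let rank_ker : (\rank (kermx Amx^T) <= 1)%N.
Proof.
have j0 : 'I_#|V| := Ordinal Vpos.
apply: leq_trans (mxrankS (_ : (kermx Amx^T <= (const_mx 1 : 'rV['F_2]_#|V|))%MS)) (rank_leq_row _).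
apply/row_subP => i.
have : row i (kermx Amx^T) *m Amx^T = 0 by rewrite -row_mul mulmx_ker row0.
move: (row i _) => u uA.
pose f (v : V) := u 0 (enum_rank v).
have fe : forall e, rep e -> f (vert e) = f (vert (alpha e)).
  move=> e re; apply: F2_add0.
  have := congr1 (fun M : 'rV['F_2]_#|rep| => M 0 (@enum_rank_in _ e rep re e)) uA; rewrite !mxE.
  under eq_bigr => j _ do rewrite !mxE enum_rankK_in // natrD mulrDr.
  by rewrite big_split /= !sum_ind.
have fh : forall h, ~~ bud h -> f (vert h) = f (vert (alpha h)).
  move=> h nb; case rh : (rep h); first exact: fe.
  by rewrite (fe (alpha h)) ?aK // repA // rh.
have ft : forall x y, tree_rel vert alpha bud x y -> f x = f y.
  move=> x y /existsP [h /and3P [nb /eqP <- /eqP <-]]; exact: fh.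
have -> : u = u 0 j0 *: const_mx 1.
  apply/rowP => j; rewrite !mxE mulr1.
  have := connect_const ft (conn (enum_val j) (enum_val j0)).
  by rewrite /f !enum_valK => ->.
by rewrite scalemx_sub.
Qed.

Let Amx_free : row_free Amx.
Proof.
rewrite /row_free -mxrank_tr; apply/eqP/anti_leq/andP; split; first exact: rank_leq_col.
have := rank_ker; rewrite mxrank_ker leq_subLR => H.
apply: (@leq_trans (#|V| - 1)); first by rewrite card_rep.
by rewrite leq_subLR addnC.
Qed.

Lemma part1_even : forall h, ~~ bud h -> ~~ odd (w h).
Proof.
pose x : 'rV['F_2]_#|rep| := \row_i ((w (enum_val i))%:R).
have xA : x *m Amx = 0.
  apply/rowP => j; rewrite !mxE; set y := enum_val j.
  pose G h := ((w h * (vert h == y))%N%:R : 'F_2).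
  transitivity (\sum_(i < #|rep|) (G (enum_val i) + G (alpha (enum_val i)))).
    apply: eq_bigr => i _; rewrite !mxE /G natrD mulrDr !natrM; congr (_ + _).
    have nb : ~~ bud (enum_val i) by have := enum_valP i; rewrite unfold_in => /andP[].
    congr (_ * _); rewrite !Zp_nat; apply: val_inj => /=; rewrite !modn2 oddA //.
  rewrite -(big_enum_val (fun h => G h + G (alpha h))) big_split /=.
  rewrite [X in _ + X = _](reindex_inj (@perm_inj _ alpha)) /=.
  rewrite [X in _ + X = _](eq_bigr G); last by move=> j0 _; rewrite aK.
  transitivity (\sum_(h | ~~ bud h) G h).
    rewrite [RHS](bigID rep) /=; congr (_ + _).
      apply: eq_bigl => h0; rewrite unfold_in /rep; by case: (bud h0).
    apply: eq_bigl => h0; rewrite unfold_in; case nb : (bud h0) => /=.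
      by rewrite /rep budA nb.
    by rewrite -/(rep (alpha h0)) repA ?nb.
  rewrite /G -natr_sum.
  have -> : (\sum_(h | ~~ bud h) w h * (vert h == y))%N = mvertex_weight vert bud w y.
    rewrite /mvertex_weight big_mkcond [RHS]big_mkcond /=; apply: eq_bigr => h _.
    by case: (bud h); case: (vert h == y); rewrite ?muln1 ?muln0.
  case by_ : (black y).
    rewrite /mvertex_weight big1 // => h /andP[/eqP vh nb].
    by apply/eqP; rewrite -leqn0 leqNgt Nm // vh by_.
  by rewrite white ?by_ // Zp_nat; apply: val_inj => /=; rewrite modn2 (negbTE d_even).
have x0 : x = 0 by apply: (row_free_inj Amx_free); rewrite mul0mx.
have even_rep e : rep e -> ~~ odd (w e).
  move=> re; have := congr1 (fun M : 'rV['F_2]_#|rep| => M 0 (@enum_rank_in _ e rep re e)) x0.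
  rewrite !mxE enum_rankK_in // Zp_nat => /(congr1 val) /=; rewrite modn2.
  by case: (odd (w e)).
move=> h nb; case rh : (rep h); first exact: even_rep.
by rewrite -oddA // even_rep // repA // rh.
Qed.

End Part1.

Theorem proposition16 (d : nat) (d_even : ~~ odd d) (d_ge4 : 4 <= d) :
  (forall (D V : finType) (vert : D -> V) (sigma alpha : {perm D})
          (bud : pred D) (black : pred V) (w : D -> nat),
     is_d_branching vert sigma alpha bud black w d ->
     forall h, ~~ bud h -> ~~ odd (w h) && (w h <= d - 2))
  /\
  (forall (D : finType) (sigma alpha : {perm D}) (r : D) (w : D -> nat),
     is_planar_map sigma alpha ->
     is_d_angulation sigma alpha d ->
     is_d_dm2_orientation sigma alpha r w d ->
     is_minimal sigma alpha r w ->
     forall h, ~~ outer_edge sigma alpha r h -> ~~ odd (w h)).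
Proof.
split.
- move=> D V vert sigma alpha bud black w Hb h nb.
  rewrite (part1_even d_even Hb nb) /=.
  case: Hb => _ _ _ ew; rewrite -(ew h nb); exact: leq_addr.
- move=> D sigma alpha r w Hp Hd Ho Hmin h hn.
  exact: (part2_even d_even d_ge4 Hp Hd Ho Hmin hn).
Qed.
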